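(* Let $\Omega\subset\mathbb{R}^n$ be a bounded open convex set with smooth boundary, let $\Lambda>0$, and let $u$ be a nonconstant continuous viscosity solution of $(N_\Lambda)$. Then $u$ changes sign in $\Omega$, i.e. both sets $\{x\in\Omega:u(x)>0\}$ and $\{x\in\Omega:u(x)<0\}$ are nonempty.
   Context: $\nu$ denotes the outer unit normal to $\partial\Omega$, and $\Delta_\infty u=\sum_{i,j=1}^n u_{x_i}u_{x_ix_j}u_{x_j}$. For $\Lambda\ge 0$, problem $(N_\Lambda)$ is $$\min\{|\nabla u|-\Lambda|u|,-\Delta_\infty u\}=0 \text{ in }\{u>0\}\cap\Omega,\quad \max\{\Lambda|u|-|\nabla u|,-\Delta_\infty u\}=0 \text{ in }\{u<0\}\cap\Omega,\quad -\Delta_\infty u=0 \text{ in }\{u=0\}\cap\Omega,\quad \tfrac{\partial u}{\partial\nu}=0 \text{ on }\partial\Omega,$$ understood in the viscosity sense as follows. For $s\in\mathbb{R}$, $\xi\in\mathbb{R}^n$, $X$ a symmetric $n\times n$ matrix, let $F(s,\xi,X)=\min\{|\xi|-\Lambda|s|,-\langle X\xi,\xi\rangle\}$, $G(s,\xi,X)=\max\{\Lambda|s|-|\xi|,-\langle X\xi,\xi\rangle\}$, $H(X)=-\langle X\xi,\xi\rangle$ (evaluated at the same $\xi$). For a function $u$ and point $x_0$, let $E$ denote $F$ if $u(x_0)>0$, $G$ if $u(x_0)<0$, $H$ if $u(x_0)=0$. An upper semicontinuous $u$ on $\overline\Omega$ is a viscosity subsolution if: for every $x_0\in\Omega$ and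 $\phi\in C^2(\Omega)$ with $\phi(x_0)=u(x_0)$ and $u(x)<\phi(x)$ for $x\neq x_0$, one has $E(\phi(x_0),\nabla\phi(x_0),\nabla^2\phi(x_0))\le 0$; and for every $x_0\in\partial\Omega$ and $\phi\in C^2(\overline\Omega)$ with the same touching property, $\min\{E(\phi(x_0),\nabla\phi(x_0),\nabla^2\phi(x_0)),\frac{\partial\phi}{\partial\nu}(x_0)\}\le 0$. A lower semicontinuous $u$ is a viscosity supersolution if the same holds with $u(x)>\phi(x)$ for $x\ne x_0$, with ''$E\le 0$'' replaced by ''$E\ge 0$'' at interior points and with $\max\{E(\phi(x_0),\nabla\phi(x_0),\nabla^2\phi(x_0)),\frac{\partial\phi}{\partial\nu}(x_0)\}\ge 0$ at boundary points. A continuous $u$ is a viscosity solution if it is both a sub- and a supersolution. *)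

(* Defs.v *)
From mathcomp Require Import all_boot.
From Stdlib Require Import Reals.
Set Implicit Arguments. Unset Strict Implicit.
Local Open Scope R_scope.

Definition vec (n : nat) := 'I_n -> R.

Definition vadd n (x y : vec n) : vec n := fun i => x i + y i.
Definition vsub n (x y : vec n) : vec n := fun i => x i - y i.
Definition vscale n (a : R) (x : vec n) : vec n := fun i => a * x i.
Definition dot n (x y : vec n) : R := \big[Rplus/0]_(i < n) (x i * y i).
Definition vnorm n (x : vec n) : R := sqrt (dot x x).
Definition dist n (x y : vec n) : R := vnorm (vsub x y).

Definition quad n (X : 'I_n -> 'I_n -> R) (xi : vec n) : R :=
  \big[Rplus/0]_(i < n) \big[Rplus/0]_(j < n) (X i j * xi i * xi j).

Definition Rn_open n (O : vec n -> Prop) : Prop :=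
  forall x, O x -> exists r, 0 < r /\ forall y, dist y x < r -> O y.
Definition Rn_bounded n (O : vec n -> Prop) : Prop :=
  exists M, forall x, O x -> vnorm x <= M.
Definition Rn_convex n (O : vec n -> Prop) : Prop :=
  forall x y t, O x -> O y -> 0 <= t <= 1 ->
    O (vadd (vscale t x) (vscale (1 - t) y)).
Definition Rn_closure n (O : vec n -> Prop) (x : vec n) : Prop :=
  forall eps, 0 < eps -> exists y, O y /\ dist y x < eps.
Definition Rn_boundary n (O : vec n -> Prop) (x : vec n) : Prop :=
  Rn_closure O x /\ ~ O x.

Definition continuous_at n (f : vec n -> R) (x : vec n) : Prop :=
  forall eps, 0 < eps -> exists d, 0 < d /\
    forall y, dist y x < d -> Rabs (f y - f x) < eps.
Definition continuous_on n (A : vec n -> Prop) (f : vec n -> R) : Prop :=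
  forall x, A x -> forall eps, 0 < eps -> exists d, 0 < d /\
    forall y, A y -> dist y x < d -> Rabs (f y - f x) < eps.
Definition usc_on n (A : vec n -> Prop) (f : vec n -> R) : Prop :=
  forall x, A x -> forall eps, 0 < eps -> exists d, 0 < d /\
    forall y, A y -> dist y x < d -> f y < f x + eps.
Definition lsc_on n (A : vec n -> Prop) (f : vec n -> R) : Prop :=
  forall x, A x -> forall eps, 0 < eps -> exists d, 0 < d /\
    forall y, A y -> dist y x < d -> f x - eps < f y.

Definition shift n (x : vec n) (i : 'I_n) (t : R) : vec n :=
  fun j => if j == i then x j + t else x j.
Definition partial n (f : vec n -> R) (i : 'I_n) (x : vec n) (l : R) : Prop :=
  derivable_pt_lim (fun t => f (shift x i t)) 0 l.

Definition C2_on n (U : vec n -> Prop) (f : vec n -> R)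
    (g : vec n -> vec n) (H : vec n -> 'I_n -> 'I_n -> R) : Prop :=
  forall x, U x ->
    continuous_at f x /\
    (forall i, partial f i x (g x i) /\ continuous_at (fun y => g y i) x) /\
    (forall i j, partial (fun y => g y i) j x (H x i j) /\
                 continuous_at (fun y => H y i j) x).

Fixpoint Ck n (k : nat) (f : vec n -> R) : Prop :=
  match k with
  | O => forall x, continuous_at f x
  | S k' => (forall x, continuous_at f x) /\
      exists D : 'I_n -> vec n -> R,
        (forall i x, partial f i x (D i x)) /\ (forall i, Ck k' (D i))
  end.
Definition smooth n (f : vec n -> R) : Prop := forall k, Ck k f.

Definition defining_function n (O : vec n -> Prop) (rho : vec n -> R)
    (Drho : vec n -> vec n) : Prop :=
  smooth rho /\
  (forall x i, partial rho i x (Drho x i)) /\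
  (forall x, O x <-> rho x < 0) /\
  (forall x, rho x = 0 -> Drho x <> (fun _ => 0)).

Definition smooth_boundary n (O : vec n -> Prop) : Prop :=
  exists rho Drho, defining_function O rho Drho.

Definition outer_normal n (O : vec n -> Prop) (x0 nu : vec n) : Prop :=
  Rn_boundary O x0 /\
  exists rho Drho, defining_function O rho Drho /\
    nu = vscale (/ vnorm (Drho x0)) (Drho x0).

Definition Fop n (Lam s : R) (xi : vec n) (X : 'I_n -> 'I_n -> R) : R :=
  Rmin (vnorm xi - Lam * Rabs s) (- quad X xi).
Definition Gop n (Lam s : R) (xi : vec n) (X : 'I_n -> 'I_n -> R) : R :=
  Rmax (Lam * Rabs s - vnorm xi) (- quad X xi).
Definition Hop n (xi : vec n) (X : 'I_n -> 'I_n -> R) : R := - quad X xi.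

(* the selection uses the sign of u(x0) *)
Definition Eop n (Lam ux0 s : R) (xi : vec n) (X : 'I_n -> 'I_n -> R) : R :=
  if Rlt_dec 0 ux0 then Fop Lam s xi X
  else if Rlt_dec ux0 0 then Gop Lam s xi X
  else Hop xi X.

Definition visc_sub n (O : vec n -> Prop) (Lam : R) (u : vec n -> R) : Prop :=
  usc_on (Rn_closure O) u /\
  (forall x0 phi g H, O x0 -> C2_on O phi g H -> phi x0 = u x0 ->
     (forall x, O x -> x <> x0 -> u x < phi x) ->
     Eop Lam (u x0) (phi x0) (g x0) (H x0) <= 0) /\
  (forall x0 nu phi g H U, outer_normal O x0 nu ->
     Rn_open U -> (forall x, Rn_closure O x -> U x) -> C2_on U phi g H ->
     phi x0 = u x0 ->
     (forall x, Rn_closure O x -> x <> x0 -> u x < phi x) ->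
     Rmin (Eop Lam (u x0) (phi x0) (g x0) (H x0)) (dot (g x0) nu) <= 0).

Definition visc_super n (O : vec n -> Prop) (Lam : R) (u : vec n -> R) : Prop :=
  lsc_on (Rn_closure O) u /\
  (forall x0 phi g H, O x0 -> C2_on O phi g H -> phi x0 = u x0 ->
     (forall x, O x -> x <> x0 -> u x > phi x) ->
     Eop Lam (u x0) (phi x0) (g x0) (H x0) >= 0) /\
  (forall x0 nu phi g H U, outer_normal O x0 nu ->
     Rn_open U -> (forall x, Rn_closure O x -> U x) -> C2_on U phi g H ->
     phi x0 = u x0 ->
     (forall x, Rn_closure O x -> x <> x0 -> u x > phi x) ->
     Rmax (Eop Lam (u x0) (phi x0) (g x0) (H x0)) (dot (g x0) nu) >= 0).

Definition visc_solution n (O : vec n -> Prop) (Lam : R) (u : vec n -> R) : Prop :=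
  continuous_on (Rn_closure O) u /\ visc_sub O Lam u /\ visc_super O Lam u.

(* Main.v *)
Require Import Defs.
From mathcomp Require Import all_boot.
From Stdlib Require Import Reals.
From HB Require Import structures.
From Stdlib Require Import Lra Lia FunctionalExtensionality Classical ClassicalEpsilon.
Local Open Scope R_scope.
Set Warnings "-redundant-canonical-projection,-notation-overridden,-deprecated".


HB.instance Definition _ := Monoid.isComLaw.Build R 0 Rplus
  (fun a b c => esym (Rplus_assoc a b c)) Rplus_comm Rplus_0_l.


Lemma sumR_ge0 {n} (F : 'I_n -> R) : (forall i, 0 <= F i) -> 0 <= \big[Rplus/0]_(i < n) F i.
Proof. move=> H; apply: (big_ind (fun x => 0 <= x)) => //; [lra| move=> a b; lra]. Qed.

Lemma sumR_le {n} (F G : 'I_n -> R) : (forall i, F i <= G i) ->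
  \big[Rplus/0]_(i < n) F i <= \big[Rplus/0]_(i < n) G i.
Proof. move=> H; apply: (big_ind2 (fun x y => x <= y)) => //; [lra| move=> a b c d; lra]. Qed.

Lemma sumR_plus {n} (F G : 'I_n -> R) : \big[Rplus/0]_(i < n) (F i + G i) =
  \big[Rplus/0]_(i < n) F i + \big[Rplus/0]_(i < n) G i.
Proof. by rewrite big_split. Qed.

Lemma sumR_scal {n} c (F : 'I_n -> R) : \big[Rplus/0]_(i < n) (c * F i) = c * \big[Rplus/0]_(i < n) F i.
Proof. apply: (big_ind2 (fun x y => x = c * y)) => //; [ring| move=> a b d e -> ->; ring]. Qed.

Lemma sumR_ext {n} (F G : 'I_n -> R) : (forall i, F i = G i) ->
  \big[Rplus/0]_(i < n) F i = \big[Rplus/0]_(i < n) G i.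
Proof. by move=> H; apply: eq_bigr => i _. Qed.

Lemma split_sum {n} (F : 'I_n -> R) i : \big[Rplus/0]_(j < n) F j = F i + \big[Rplus/0]_(j < n | j != i) F j.
Proof. by rewrite (bigD1 i). Qed.

Lemma sumR_term {n} (F : 'I_n -> R) i : (forall j, 0 <= F j) -> F i <= \big[Rplus/0]_(j < n) F j.
Proof.
move=> H; rewrite (split_sum F i).
have : 0 <= \big[Rplus/0]_(j < n | j != i) F j.
  apply: (big_ind (fun x => 0 <= x)) => //; [lra| move=> a b; lra].
move=> ?; lra.
Qed.

Lemma sumR_delta {n} (F : 'I_n -> R) i : \big[Rplus/0]_(j < n) (F j * (if j == i then 1 else 0)) = F i.
Proof.
rewrite (split_sum _ i) eqxx big1 ?Rmult_1_r ?Rplus_0_r //.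
by move=> j /negbTE ->; rewrite Rmult_0_r.
Qed.

Lemma sumR_delta' {n} (F : 'I_n -> R) i : \big[Rplus/0]_(j < n) ((if j == i then 1 else 0) * F j) = F i.
Proof. rewrite -(sumR_delta F i); apply: sumR_ext => j; ring. Qed.

Lemma sumR_eq0 {n} (F : 'I_n -> R) : (forall i, 0 <= F i) -> \big[Rplus/0]_(i < n) F i = 0 -> forall i, F i = 0.
Proof. move=> H H0 i; have := sumR_term F i H; have := H i; move=> ? ?; lra. Qed.

Lemma sumR_const n c : \big[Rplus/0]_(i < n) c = INR n * c.
Proof.
rewrite big_const_ord; elim: n => [|m IH] /=; first ring.
rewrite IH; case: m {IH} => [|m] /=; ring.
Qed.


Lemma sqr_ge0 (a : R) : 0 <= a * a.
Proof. exact: Rle_0_sqr. Qed.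

Lemma shift0 {n} (x : vec n) i : shift x i 0 = x.
Proof. apply: functional_extensionality => j; rewrite /shift; case: (j == i) => //; ring. Qed.

Lemma shift_shift {n} (x : vec n) i a b : shift (shift x i a) i b = shift x i (a + b).
Proof. apply: functional_extensionality => j; rewrite /shift; case: (j == i) => //; ring. Qed.

Lemma dot_ge0 {n} (x : vec n) : 0 <= dot x x.
Proof. apply: sumR_ge0 => i; apply: sqr_ge0. Qed.

Lemma vnorm_ge0 {n} (x : vec n) : 0 <= vnorm x.
Proof. apply: sqrt_pos. Qed.

Lemma vnorm_sq {n} (x : vec n) : vnorm x * vnorm x = dot x x.
Proof. by rewrite /vnorm sqrt_sqrt //; apply: dot_ge0. Qed.

Lemma dist_sq {n} (x y : vec n) :
  Defs.dist x y * Defs.dist x y = \big[Rplus/0]_(i < n) ((x i - y i) * (x i - y i)).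
Proof. by rewrite /Defs.dist vnorm_sq. Qed.

Lemma dist_ge0 {n} (x y : vec n) : 0 <= Defs.dist x y.
Proof. apply: vnorm_ge0. Qed.

Lemma coord_le_dist {n} (x y : vec n) i : Rabs (x i - y i) <= Defs.dist x y.
Proof.
rewrite -[X in _ <= X](Rabs_pos_eq (Defs.dist x y)); last by apply: dist_ge0.
apply: Rsqr_le_abs_0.
rewrite /Rsqr dist_sq; apply: (sumR_term (fun j => (x j - y j) * (x j - y j))) => j /=; apply: sqr_ge0.
Qed.

Lemma vdist_refl {n} (x : vec n) : Defs.dist x x = 0.
Proof.
rewrite /Defs.dist /vnorm /dot (_ : \big[Rplus/0]_(i < n) _ = 0) ?sqrt_0 //.
rewrite big1 // => i _; rewrite /vsub; ring.
Qed.

Lemma vdist_sym {n} (x y : vec n) : Defs.dist x y = Defs.dist y x.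
Proof. rewrite /Defs.dist /vnorm; f_equal; apply: sumR_ext => i; rewrite /vsub; ring. Qed.

Lemma dist_eq0 {n} (x y : vec n) : Defs.dist x y = 0 -> x = y.
Proof.
move=> H; have H2 : Defs.dist x y * Defs.dist x y = 0 by rewrite H; ring.
rewrite dist_sq in H2.
have H3 := sumR_eq0 (fun j => (x j - y j) * (x j - y j)) (fun j => sqr_ge0 _) H2.
apply: functional_extensionality => i.
have := H3 i => /= /Rmult_integral; lra.
Qed.

Lemma dist_tri2 {n} (a b c : vec n) :
  Defs.dist a c * Defs.dist a c <=
  2 * (Defs.dist a b * Defs.dist a b + Defs.dist b c * Defs.dist b c).
Proof.
rewrite !dist_sq -sumR_plus -sumR_scal; apply: sumR_le => i.
have := sqr_ge0 ((a i - b i) - (b i - c i)); nra.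
Qed.

Lemma cont_const {n} (c : R) (x : vec n) : continuous_at (fun _ => c) x.
Proof. move=> e He; exists 1; split; first lra; move=> y _; rewrite Rminus_diag Rabs_R0; lra. Qed.

Lemma cont_coord n j (x : vec n) : continuous_at (fun y => y j) x.
Proof. move=> e He; exists e; split=> // y Hy; have := coord_le_dist y x j; lra. Qed.

Lemma cont_plus {n} (f g : vec n -> R) x :
  continuous_at f x -> continuous_at g x -> continuous_at (fun y => f y + g y) x.
Proof.
move=> Hf Hg e He.
have [d1 [Hd1 H1]] := Hf (e/2) ltac:(lra).
have [d2 [Hd2 H2]] := Hg (e/2) ltac:(lra).
exists (Rmin d1 d2); split; first by apply: Rmin_pos.
move=> y Hy.
have := H1 y (Rlt_le_trans _ _ _ Hy (Rmin_l _ _)).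
have := H2 y (Rlt_le_trans _ _ _ Hy (Rmin_r _ _)).
move=> A B.
have := Rabs_triang (f y - f x) (g y - g x).
have -> : f y - f x + (g y - g x) = f y + g y - (f x + g x) by ring.
lra.
Qed.

Lemma cont_opp {n} (f : vec n -> R) x :
  continuous_at f x -> continuous_at (fun y => - f y) x.
Proof.
move=> Hf e He; have [d [Hd H]] := Hf e He; exists d; split=> // y Hy.
have -> : - f y - - f x = - (f y - f x) by ring.
by rewrite Rabs_Ropp; apply: H.
Qed.

Lemma cont_mult {n} (f g : vec n -> R) x :
  continuous_at f x -> continuous_at g x -> continuous_at (fun y => f y * g y) x.
Proof.
move=> Hf Hg e He.
set a := f x; set b := g x.
have Ha := Rabs_pos a; have Hb := Rabs_pos b.
set e1 := Rmin 1 (e / (2 * (Rabs b + 1))).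
set e2 := Rmin 1 (e / (2 * (Rabs a + 1))).
have He1 : 0 < e1 by apply: Rmin_pos; [lra| apply: Rdiv_lt_0_compat; lra].
have He2 : 0 < e2 by apply: Rmin_pos; [lra| apply: Rdiv_lt_0_compat; lra].
have [d1 [Hd1 H1]] := Hf e1 He1.
have [d2 [Hd2 H2]] := Hg e2 He2.
exists (Rmin d1 d2); split; first by apply: Rmin_pos.
move=> y Hy.
have A := H1 y (Rlt_le_trans _ _ _ Hy (Rmin_l _ _)).
have B := H2 y (Rlt_le_trans _ _ _ Hy (Rmin_r _ _)).
rewrite -/a in A; rewrite -/b in B.
have -> : f y * g y - a * b = (f y - a) * g y + a * (g y - b) by rewrite /a /b; ring.
apply: Rle_lt_trans (Rabs_triang _ _) _.
rewrite !Rabs_mult.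
have Hgy : Rabs (g y) <= Rabs b + 1.
  have := Rabs_triang (g y - b) b; have -> : g y - b + b = g y by ring.
  have := Rmin_l 1 (e / (2 * (Rabs a + 1))); rewrite -/e2; lra.
have E1 : e1 * (Rabs b + 1) <= e / 2.
  have := Rmin_r 1 (e / (2 * (Rabs b + 1))); rewrite -/e1 => h.
  have -> : e / 2 = (e / (2 * (Rabs b + 1))) * (Rabs b + 1) by field; lra.
  apply: Rmult_le_compat_r; lra.
have E2 : Rabs a * e2 <= e / 2.
  have := Rmin_r 1 (e / (2 * (Rabs a + 1))); rewrite -/e2 => h.
  have : (Rabs a) * e2 <= (Rabs a + 1) * (e / (2 * (Rabs a + 1))).
    apply: Rmult_le_compat; lra.
  have -> : (Rabs a + 1) * (e / (2 * (Rabs a + 1))) = e / 2 by field; lra.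
  done.
have P1 : Rabs (f y - a) * Rabs (g y) <= e1 * (Rabs b + 1).
  apply: Rmult_le_compat; try lra; apply: Rabs_pos.
have P2 : Rabs a * Rabs (g y - b) <= Rabs a * e2.
  apply: Rmult_le_compat_l; lra.
case: (Req_dec (Rabs a) 0) => Ha0.
  rewrite Ha0 Rmult_0_l; have : 0 <= Rabs (f y - a) * Rabs (g y) by apply: Rmult_le_pos; apply: Rabs_pos.
  lra.
have : Rabs a * Rabs (g y - b) < Rabs a * e2.
  apply: Rmult_lt_compat_l; lra.
lra.
Qed.

Lemma cont_comp {n} (g : R -> R) (f : vec n -> R) x :
  continuity_pt g (f x) -> continuous_at f x -> continuous_at (fun y => g (f y)) x.
Proof.
move=> Hg Hf e He.
move: Hg; rewrite /continuity_pt /continue_in /limit1_in /limit_in => Hg.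
have [a [Ha H]] := Hg e He.
have [d [Hd H2]] := Hf a Ha.
exists d; split=> // y Hy.
case: (Req_dec (f y) (f x)) => E; first by rewrite E Rminus_diag Rabs_R0.
apply: (H (f y)); split.
  by split; [done| apply: not_eq_sym].
by apply: H2.
Qed.

Lemma cont_sum_gen {n} (I : eqType) (r : seq I) (P : pred I) (F : I -> vec n -> R) x :
  (forall j, continuous_at (F j) x) ->
  continuous_at (fun y => \big[Rplus/0]_(j <- r | P j) F j y) x.
Proof.
move=> H; elim: r => [|a r IH].
  rewrite (_ : (fun y => _) = fun _ => 0); first by apply: cont_const.
  by apply: functional_extensionality => y; rewrite big_nil.
rewrite (_ : (fun y => _) = fun y => if P a then F a y + \big[Rplus/0]_(j <- r | P j) F j y
   else \big[Rplus/0]_(j <- r | P j) F j y); last first.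
  by apply: functional_extensionality => y; rewrite big_cons.
by case: (P a) => //; apply: cont_plus.
Qed.

Lemma cont_sum n m (F : 'I_m -> vec n -> R) x :
  (forall j, continuous_at (F j) x) ->
  continuous_at (fun y => \big[Rplus/0]_(j < m) F j y) x.
Proof. move=> H; exact: (cont_sum_gen _ (index_enum 'I_m) (fun _ => true) F x H). Qed.

Lemma dpl_ext {f g : R -> R} {x l} : (forall t, f t = g t) -> derivable_pt_lim g x l -> derivable_pt_lim f x l.
Proof. by move=> H; rewrite (functional_extensionality _ _ H). Qed.

Lemma partial_val {n} {f : vec n -> R} {i x} l {l'} : partial f i x l -> l = l' -> partial f i x l'.
Proof. by move=> H <-. Qed.

Lemma partial_const {n} (c : R) i (x : vec n) : partial (fun _ => c) i x 0.
Proof. exact: derivable_pt_lim_const. Qed.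

Lemma partial_coord {n} j i (x : vec n) : partial (fun y => y j) i x (if j == i then 1 else 0).
Proof.
rewrite /partial /shift; case: (j == i).
  apply: (dpl_ext (g := (fun t => x j + t))) => // .
  have := derivable_pt_lim_plus (fun _ => x j) id 0 0 1 (derivable_pt_lim_const _ _) (derivable_pt_lim_id 0).
  by rewrite Rplus_0_l.
exact: derivable_pt_lim_const.
Qed.

Lemma partial_plus {n} {f g : vec n -> R} {i x lf lg} :
  partial f i x lf -> partial g i x lg -> partial (fun y => f y + g y) i x (lf + lg).
Proof. move=> Hf Hg; exact: (derivable_pt_lim_plus _ _ _ _ _ Hf Hg). Qed.

Lemma partial_opp {n} {f : vec n -> R} {i x lf} :
  partial f i x lf -> partial (fun y => - f y) i x (- lf).
Proof. move=> Hf; exact: (derivable_pt_lim_opp _ _ _ Hf). Qed.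

Lemma partial_mult {n} {f g : vec n -> R} {i x lf lg} :
  partial f i x lf -> partial g i x lg -> partial (fun y => f y * g y) i x (lf * g x + f x * lg).
Proof.
move=> Hf Hg; have := derivable_pt_lim_mult _ _ _ _ _ Hf Hg.
by rewrite /mult_fct shift0.
Qed.

Lemma partial_comp {n} {g : R -> R} {f : vec n -> R} {i x lf lg} :
  partial f i x lf -> derivable_pt_lim g (f x) lg -> partial (fun y => g (f y)) i x (lg * lf).
Proof.
move=> Hf Hg; rewrite /partial.
have Hg' : derivable_pt_lim g ((fun t => f (shift x i t)) 0) lg by rewrite /= shift0.
exact: (derivable_pt_lim_comp _ _ _ _ _ Hf Hg').
Qed.

Lemma partial_sum_gen {n} (I : eqType) (r : seq I) (P : pred I) (F : I -> vec n -> R) (l : I -> R) i x :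
  (forall j, partial (F j) i x (l j)) ->
  partial (fun y => \big[Rplus/0]_(j <- r | P j) F j y) i x (\big[Rplus/0]_(j <- r | P j) l j).
Proof.
move=> H; elim: r => [|a r IH].
  rewrite big_nil /partial; apply: (dpl_ext (g := fun _ => 0)).
    by move=> t; rewrite big_nil.
  exact: derivable_pt_lim_const.
rewrite big_cons /partial.
apply: (dpl_ext (g := fun t => if P a then F a (shift x i t) + \big[Rplus/0]_(j <- r | P j) F j (shift x i t)
   else \big[Rplus/0]_(j <- r | P j) F j (shift x i t))).
  by move=> t; rewrite big_cons.
by case: (P a); [exact: (partial_plus (H a) IH) | exact: IH].
Qed.

Lemma partial_sum {n} m (F : 'I_m -> vec n -> R) (l : 'I_m -> R) i x :
  (forall j, partial (F j) i x (l j)) ->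
  partial (fun y => \big[Rplus/0]_(j < m) F j y) i x (\big[Rplus/0]_(j < m) l j).
Proof. move=> H; exact: (partial_sum_gen _ (index_enum 'I_m) (fun _ => true) F l i x H). Qed.

Lemma cont_minus {n} (f g : vec n -> R) x :
  continuous_at f x -> continuous_at g x -> continuous_at (fun y => f y - g y) x.
Proof. move=> Hf Hg; rewrite /Rminus; exact: (cont_plus _ _ _ Hf (cont_opp _ _ Hg)). Qed.

Lemma partial_minus {n} {f g : vec n -> R} {i x lf lg} :
  partial f i x lf -> partial g i x lg -> partial (fun y => f y - g y) i x (lf - lg).
Proof. move=> Hf Hg; rewrite /Rminus; exact: (partial_plus Hf (partial_opp Hg)). Qed.

Definition sq {n} (p x : vec n) : R := \big[Rplus/0]_(j < n) ((x j - p j) * (x j - p j)).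
Definition Ex {n} (k : R) (p x : vec n) : R := exp (- k * sq p x).
Definition dlt {n} (i j : 'I_n) : R := if i == j then 1 else 0.

Lemma cont_sq {n} (p x : vec n) : continuous_at (sq p) x.
Proof.
rewrite /sq; apply: (cont_sum _ _ (fun j y => (y j - p j) * (y j - p j))) => j.
apply: (@cont_mult _ (fun y => y j - p j) (fun y => y j - p j));
 apply: (@cont_plus _ (fun y => y j) (fun _ => - p j)); [apply: cont_coord| apply: cont_const|apply: cont_coord| apply: cont_const].
Qed.

Lemma cont_exp_pt x : continuity_pt exp x.
Proof. exact: (derivable_continuous _ derivable_exp). Qed.

Lemma cont_Ex {n} k (p x : vec n) : continuous_at (Ex k p) x.
Proof.
apply: (@cont_comp _ exp (fun y => - k * sq p y)); first exact: cont_exp_pt.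
apply: (@cont_mult _ (fun _ => - k) (sq p)); [apply: cont_const| apply: cont_sq].
Qed.

Ltac cont_tac :=
  repeat match goal with
  | |- continuous_at (fun _ => ?c) _ => apply: cont_const
  | |- continuous_at (fun y => y ?j) _ => apply: cont_coord
  | |- continuous_at (fun y => sq ?p y) _ => apply: cont_sq
  | |- continuous_at (fun y => Ex ?k ?p y) _ => apply: cont_Ex
  | |- continuous_at (fun y => @?A y + @?B y) _ => apply: (@cont_plus _ A B)
  | |- continuous_at (fun y => @?A y - @?B y) _ => apply: (@cont_minus _ A B)
  | |- continuous_at (fun y => - @?A y) _ => apply: (@cont_opp _ A)
  | |- continuous_at (fun y => @?A y * @?B y) _ => apply: (@cont_mult _ A B)
  end.

Lemma partial_sq {n} (p : vec n) i x : partial (sq p) i x (2 * (x i - p i)).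
Proof.
apply: (partial_val (\big[Rplus/0]_(j < n)
   ((dlt j i + 0) * (x j - p j) + (x j - p j) * (dlt j i + 0)))).
  rewrite /sq; apply: (partial_sum _ (fun j y => (y j - p j) * (y j - p j))) => j.
  apply: partial_mult; apply: partial_plus; [apply: partial_coord| apply: partial_const|apply: partial_coord| apply: partial_const].
rewrite -(sumR_delta (fun j => 2 * (x j - p j)) i).
apply: sumR_ext => j; rewrite /dlt; ring.
Qed.

Lemma partial_Ex {n} k (p : vec n) i x :
  partial (Ex k p) i x (Ex k p x * (-2 * k * (x i - p i))).
Proof.
apply: (partial_val (exp (- k * sq p x) * (0 * sq p x + - k * (2 * (x i - p i))))).
  apply: (@partial_comp _ exp (fun y => - k * sq p y)); last exact: derivable_pt_lim_exp.
  apply: partial_mult; [apply: partial_const| apply: partial_sq].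
rewrite /Ex; ring.
Qed.

Ltac dtac :=
  match goal with
  | |- partial (fun _ => ?c) _ _ _ => apply: partial_const
  | |- partial (fun y => y ?j) _ _ _ => apply: partial_coord
  | |- partial (fun y => sq ?p y) _ _ _ => apply: partial_sq
  | |- partial (fun y => Ex ?k ?p y) _ _ _ => apply: partial_Ex
  | |- partial (fun y => @?A y + @?B y) _ _ _ => apply: (@partial_plus _ A B); dtac
  | |- partial (fun y => @?A y - @?B y) _ _ _ => apply: (@partial_minus _ A B); dtac
  | |- partial (fun y => - @?A y) _ _ _ => apply: (@partial_opp _ A); dtac
  | |- partial (fun y => @?A y * @?B y) _ _ _ => apply: (@partial_mult _ A B); dtac
  end.


Definition Tf {n} (k al be c : R) (p y x : vec n) : R :=
  al * Ex k p x + c + be * (sq y x * sq y x).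
Definition Tg {n} (k al be : R) (p y x : vec n) (i : 'I_n) : R :=
  al * (Ex k p x * (-2 * k * (x i - p i))) + be * (4 * sq y x * (x i - y i)).
Definition TH {n} (k al be : R) (p y x : vec n) (i j : 'I_n) : R :=
  al * ((Ex k p x * (-2 * k * (x j - p j))) * (-2 * k * (x i - p i)) + Ex k p x * (-2 * k * dlt i j))
  + be * (8 * (x j - y j) * (x i - y i) + 4 * sq y x * dlt i j).

Lemma Tf_C2 {n} (U : vec n -> Prop) k al be c p y :
  C2_on U (Tf k al be c p y) (Tg k al be p y) (TH k al be p y).
Proof.
move=> x _; split; [|split].
- rewrite /Tf; cont_tac.
- move=> i; split.
  + eapply (partial_val _); first by rewrite /Tf; dtac.
    rewrite /Tg /dlt; ring.
  + rewrite /Tg; cont_tac.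
- move=> i j; split.
  + eapply (partial_val _); first by rewrite /Tg; dtac.
    rewrite /TH /dlt; case: (i == j); ring.
  + rewrite /TH; cont_tac.
Qed.

Lemma sq_self {n} (y : vec n) : sq y y = 0.
Proof. rewrite /sq big1 // => j _; ring. Qed.

Lemma sumR_dlt {n} (F : 'I_n -> R) i : \big[Rplus/0]_(j < n) (F j * dlt i j) = F i.
Proof.
rewrite -(sumR_delta F i); apply: sumR_ext => j; rewrite /dlt eq_sym; done.
Qed.

Lemma quad_T {n} k al be (p y : vec n) :
  quad (TH k al be p y y) (Tg k al be p y y) =
  8 * (k * k * k) * (al * al * al) * (Ex k p y * Ex k p y * Ex k p y) * sq p y * (2 * k * sq p y - 1).
Proof.
set E := Ex k p y; set s := sq p y.
set c := -2 * k * al * E.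
have Hin : forall i, \big[Rplus/0]_(j < n) (TH k al be p y y i j * Tg k al be p y y i * Tg k al be p y y j)
   = (4 * k * k * al * E * c * c * (y i - p i) * (y i - p i)) * s
     + (-2 * k * al * E * c * c * (y i - p i)) * (y i - p i).
  move=> i.
  transitivity (\big[Rplus/0]_(j < n) ((4 * k * k * al * E * c * c * (y i - p i) * (y i - p i)) * ((y j - p j) * (y j - p j))
        + (-2 * k * al * E * c * c * (y i - p i)) * ((y j - p j) * dlt i j))).
    apply: sumR_ext => j; rewrite /TH /Tg sq_self -/E /c; ring.
  by rewrite sumR_plus !sumR_scal sumR_dlt.
rewrite /quad (sumR_ext _ _ Hin) sumR_plus.
transitivity ((4 * k * k * al * E * c * c * s) * s + (-2 * k * al * E * c * c) * s).
  congr (_ + _).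
    transitivity (\big[Rplus/0]_(i < n) ((4 * k * k * al * E * c * c * s) * ((y i - p i) * (y i - p i)))).
      by apply: sumR_ext => j; ring.
    by rewrite sumR_scal /s /sq.
  transitivity (\big[Rplus/0]_(i < n) ((-2 * k * al * E * c * c) * ((y i - p i) * (y i - p i)))).
    by apply: sumR_ext => j; ring.
  by rewrite sumR_scal /s /sq.
rewrite /c; ring.
Qed.

Lemma Rabs_le_inv (a b : R) : Rabs a <= b -> - b <= a <= b.
Proof. rewrite /Rabs; case: (Rcase_abs a) => ? ?; lra. Qed.

Definition cvs (u : nat -> R) (l : R) :=
  forall e, 0 < e -> exists N, forall k, (N <= k)%coq_nat -> Rabs (u k - l) < e.
Definition incr (phi : nat -> nat) := forall k, (phi k < phi (S k))%coq_nat.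

Lemma incr_ge {phi} : incr phi -> forall k, (k <= phi k)%coq_nat.
Proof. move=> H; elim=> [|k IH]; first lia. have := H k; lia. Qed.

Lemma incr_mono {phi} : incr phi -> forall a b, (a <= b)%coq_nat -> (phi a <= phi b)%coq_nat.
Proof.
move=> H a b; elim: b => [|b IH] Hab; first by have -> : a = 0%nat by lia.
case: (Nat.eq_dec a (S b)) => [->|Hne]; first lia.
have := IH ltac:(lia); have := H b; lia.
Qed.

Lemma incr_comp phi psi : incr phi -> incr psi -> incr (fun k => phi (psi k)).
Proof.
move=> H1 H2 k.
have := incr_mono H1 (psi k).+1 (psi k.+1) (H2 k).
have := H1 (psi k); lia.
Qed.

Lemma cvs_sub {u l psi} : cvs u l -> incr psi -> cvs (fun k => u (psi k)) l.
Proof.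
move=> H Hp e He; have [N HN] := H e He; exists N => k Hk.
apply: HN; have := incr_ge Hp k; lia.
Qed.

Lemma BW1 (u : nat -> R) M : (forall k, Rabs (u k) <= M) ->
  exists phi, incr phi /\ exists l, cvs (fun k => u (phi k)) l.
Proof.
move=> Hb.
have [l Hl] := Bolzano_Weierstrass u (fun c => - M <= c <= M) (compact_P3 (- M) M)
  (fun k => ltac:(have := Hb k; move/Rabs_le_inv; lra)).
have Hpick : forall N k, exists p, (N <= p)%coq_nat /\ Rabs (u p - l) < / INR (S k).
  move=> N k.
  have Hpos : 0 < / INR (S k) by apply: Rinv_0_lt_compat; apply: lt_0_INR; lia.
  have [p [Hp Hv]] := Hl (disc l (mkposreal _ Hpos)) N
     (ex_intro _ (mkposreal _ Hpos) (fun y h => h)).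
  by exists p; split.
pose pick := fun N k => proj1_sig (constructive_indefinite_description _ (Hpick N k)).
have Hpk : forall N k, (N <= pick N k)%coq_nat /\ Rabs (u (pick N k) - l) < / INR (S k).
  by move=> N k; rewrite /pick; case: (constructive_indefinite_description _ _).
pose phi := fix phi k := match k with O => pick O O | S k' => pick (S (phi k')) (S k') end.
exists phi; split.
  by move=> k /=; have [h _] := Hpk (S (phi k)) (S k); lia.
exists l => e He.
have [N HN] := INR_unbounded (/ e).
exists N => k Hk.
have H1 : Rabs (u (phi k) - l) < / INR (S k).
  by case: k Hk => [|k] Hk /=; [exact: (proj2 (Hpk O O)) | exact: (proj2 (Hpk _ _))].
apply: Rlt_le_trans H1 _.
have HS : INR N <= INR (S k) by apply: le_INR; lia.
have Hie : 0 < / e by apply: Rinv_0_lt_compat.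
rewrite -[e]Rinv_inv; apply: Rinv_le_contravar; lra.
Qed.

Lemma fin_N_seq {I : eqType} (s : seq I) (P : I -> nat -> Prop) :
  (forall i, exists N, forall k, (N <= k)%coq_nat -> P i k) ->
  exists N, forall i, i \in s -> forall k, (N <= k)%coq_nat -> P i k.
Proof.
move=> H; elim: s => [|a s [N IH]]; first by exists O.
have [Na Ha] := H a.
exists (Nat.max N Na) => i; rewrite in_cons => /orP [/eqP ->|Hi] k Hk.
  apply: Ha; lia.
apply: IH => //; lia.
Qed.

Lemma fin_N {n} (P : 'I_n -> nat -> Prop) :
  (forall i, exists N, forall k, (N <= k)%coq_nat -> P i k) ->
  exists N, forall i k, (N <= k)%coq_nat -> P i k.
Proof.
move=> H; have [N HN] := fin_N_seq (enum 'I_n) P H.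
by exists N => i k Hk; apply: HN => //; rewrite mem_enum.
Qed.

Lemma BWn_seq {n} (X : nat -> vec n) M (s : seq 'I_n) :
  (forall k i, Rabs (X k i) <= M) ->
  exists phi, incr phi /\ forall i, i \in s -> exists l, cvs (fun k => X (phi k) i) l.
Proof.
move=> Hb; elim: s => [|a s [phi [Hphi IH]]]; first by exists (fun k : nat => k); split => // k /=; lia.
have [psi [Hpsi [la Hla]]] := BW1 (fun k => X (phi k) a) M (fun k => Hb _ a).
exists (fun k => phi (psi k)); split; first exact: incr_comp.
move=> i; rewrite in_cons => /orP [/eqP ->|Hi]; first by exists la.
have [l Hl] := IH i Hi; exists l.
exact: (cvs_sub (u := fun k => X (phi k) i) Hl Hpsi).
Qed.

Lemma BWn {n} (X : nat -> vec n) M :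
  (forall k i, Rabs (X k i) <= M) ->
  exists phi, incr phi /\ exists l : vec n, forall e, 0 < e -> exists N, forall k,
     (N <= k)%coq_nat -> Defs.dist (X (phi k)) l < e.
Proof.
move=> Hb; have [phi [Hphi H]] := BWn_seq X M (enum 'I_n) Hb.
have H' : forall i, exists l, cvs (fun k => X (phi k) i) l by move=> i; apply: H; rewrite mem_enum.
pose l := fun i => proj1_sig (constructive_indefinite_description _ (H' i)).
have Hl : forall i, cvs (fun k => X (phi k) i) (l i).
  by move=> i; rewrite /l; case: (constructive_indefinite_description _ _).
exists phi; split => //; exists l => e He.
set eta := e / (INR n + 1).
have Hn := pos_INR n.
have Heta : 0 < eta by apply: Rdiv_lt_0_compat; lra.
have [N HN] := fin_N (fun i k => Rabs (X (phi k) i - l i) < eta) (fun i => Hl i eta Heta).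
exists N => k Hk.
have Hd := dist_ge0 (X (phi k)) l.
have Hsq : Defs.dist (X (phi k)) l * Defs.dist (X (phi k)) l <= INR n * (eta * eta).
  rewrite dist_sq -sumR_const; apply: sumR_le => i.
  have := HN i k Hk; move=> h.
  have h1 := Rabs_pos (X (phi k) i - l i).
  have -> : (X (phi k) i - l i) * (X (phi k) i - l i) =
     Rabs (X (phi k) i - l i) * Rabs (X (phi k) i - l i).
    by rewrite -Rabs_mult Rabs_pos_eq //; apply: sqr_ge0.
  apply: Rmult_le_compat; lra.
have E : eta * (INR n + 1) = e by rewrite /eta; field; lra.
have Hle : eta <= e by nra.
case: (Rlt_or_le (Defs.dist (X (phi k)) l) e) => // Hge.
have : e * e <= Defs.dist (X (phi k)) l * Defs.dist (X (phi k)) l by apply: Rmult_le_compat; lra.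
nra.
Qed.

Lemma choice_nat {A : Type} {P : nat -> A -> Prop} :
  (forall k, exists x, P k x) -> exists X : nat -> A, forall k, P k (X k).
Proof.
move=> H; exists (fun k => proj1_sig (constructive_indefinite_description _ (H k))).
by move=> k; case: (constructive_indefinite_description _ _).
Qed.

Lemma seqcomp {n} {C : vec n -> Prop} {M} {X : nat -> vec n} :
  (forall x, C x -> forall i, Rabs (x i) <= M) ->
  (forall x, (forall e, 0 < e -> exists y, C y /\ Defs.dist y x < e) -> C x) ->
  (forall k, C (X k)) ->
  exists phi, incr phi /\ exists l, C l /\ forall e, 0 < e -> exists N, forall k,
     (N <= k)%coq_nat -> Defs.dist (X (phi k)) l < e.
Proof.
move=> Hb Hcl HX.
have [phi [Hphi [l Hl]]] := BWn X M (fun k i => Hb _ (HX k) i).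
exists phi; split => //; exists l; split => //.
apply: Hcl => e He; have [N HN] := Hl e He.
by exists (X (phi N)); split => //; apply: HN.
Qed.

Lemma min_exists {n} (C : vec n -> Prop) (f : vec n -> R) M :
  (forall x, C x -> forall i, Rabs (x i) <= M) ->
  (forall x, (forall e, 0 < e -> exists y, C y /\ Defs.dist y x < e) -> C x) ->
  (exists x, C x) ->
  (forall x, C x -> forall e, 0 < e -> exists d, 0 < d /\
      forall y, C y -> Defs.dist y x < d -> Rabs (f y - f x) < e) ->
  exists y, C y /\ forall x, C x -> f y <= f x.
Proof.
move=> Hb Hcl [x0 Hx0] Hc.
have [b Hbnd] : exists b, forall x, C x -> b <= f x.
  apply: NNPP => Hno.
  have H1 : forall k, exists x, C x /\ f x < - INR k.
    move=> k; apply: NNPP => Hk; apply: Hno; exists (- INR k) => x Cx.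
    case: (Rlt_or_le (f x) (- INR k)) => // h; case: Hk; by exists x.
  have [X HX] := choice_nat H1.
  have [phi [Hphi [l [Cl Hl]]]] := seqcomp Hb Hcl (fun k => proj1 (HX k)).
  have [d [Hd Hcd]] := Hc l Cl 1 Rlt_0_1.
  have [N HN] := Hl d Hd.
  have [K HK] := INR_unbounded (1 - f l).
  set k := Nat.max N K.
  have h1 := Hcd _ (proj1 (HX (phi k))) (HN k ltac:(lia)).
  have h2 := proj2 (HX (phi k)).
  have h3 : INR K <= INR (phi k) by apply: le_INR; have := incr_ge Hphi k; lia.
  move/Rabs_def2: h1 => [h1 h1']; lra.
pose E r := exists x, C x /\ r = - f x.
have HEb : bound E.
  exists (- b) => r [x [Cx ->]]; have := Hbnd x Cx; lra.
have HEn : exists r, E r by exists (- f x0), x0.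
have [L [HLub HLleast]] := completeness E HEb HEn.
have Hlow : forall x, C x -> - L <= f x.
  move=> x Cx; have := HLub (- f x) (ex_intro _ x (conj Cx erefl)); lra.
have Happ : forall k, exists x, C x /\ f x < - L + / INR (S k).
  move=> k; apply: NNPP => Hk.
  have Hpos : 0 < / INR (S k) by apply: Rinv_0_lt_compat; apply: lt_0_INR; lia.
  have Hub : is_upper_bound E (L - / INR (S k)).
    move=> r [x [Cx ->]].
    case: (Rlt_or_le (f x) (- L + / INR (S k))) => h; last by lra.
    by case: Hk; exists x.
  have := HLleast _ Hub; lra.
have [X HX] := choice_nat Happ.
have [phi [Hphi [l [Cl Hl]]]] := seqcomp Hb Hcl (fun k => proj1 (HX k)).
exists l; split => // x Cx.
apply: Rle_trans (Hlow x Cx).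
apply: Rnot_lt_le => Hlt.
set e := (f l - - L) / 2.
have He : 0 < e by rewrite /e; lra.
have [d [Hd Hcd]] := Hc l Cl e He.
have [N HN] := Hl d Hd.
have [K HK] := INR_unbounded (/ e).
set k := Nat.max N K.
have h1 := Hcd _ (proj1 (HX (phi k))) (HN k ltac:(lia)).
have h2 := proj2 (HX (phi k)).
have h3 : INR K <= INR (S (phi k)) by apply: le_INR; have := incr_ge Hphi k; lia.
have h4 : / INR (S (phi k)) < e.
  have Hie : 0 < / e by apply: Rinv_0_lt_compat.
  rewrite -[e]Rinv_inv; apply: Rinv_lt_contravar; [apply: Rmult_lt_0_compat; lra| lra].
move/Rabs_def2: h1 => [h1 h1']; rewrite /e in h1' h4; lra.
Qed.

Lemma fin_delta_seq {I : eqType} (s : seq I) (P : I -> R -> Prop) :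
  (forall i d d', 0 < d' <= d -> P i d -> P i d') ->
  (forall i, exists d, 0 < d /\ P i d) ->
  exists d, 0 < d /\ forall i, i \in s -> P i d.
Proof.
move=> Hm H; elim: s => [|a s [d [Hd IH]]]; first by exists 1; split => //; lra.
have [da [Hda Ha]] := H a.
exists (Rmin d da); split; first by apply: Rmin_pos.
move=> i; rewrite in_cons => /orP [/eqP ->|Hi].
  apply: (Hm a da) => //; split; [apply: Rmin_pos => // | apply: Rmin_r].
apply: (Hm i d); last by apply: IH.
split; [apply: Rmin_pos => // | apply: Rmin_l].
Qed.

Lemma fin_delta {n} (P : 'I_n -> R -> Prop) :
  (forall i d d', 0 < d' <= d -> P i d -> P i d') ->
  (forall i, exists d, 0 < d /\ P i d) ->
  exists d, 0 < d /\ forall i, P i d.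
Proof.
move=> Hm H; have [d [Hd HP]] := fin_delta_seq (enum 'I_n) P Hm H.
by exists d; split => // i; apply: HP; rewrite mem_enum.
Qed.

Lemma dpl_shift (h : R -> R) s l :
  derivable_pt_lim (fun u => h (s + u)) 0 l -> derivable_pt_lim h s l.
Proof.
move=> H e He; have [d Hd] := H e He; exists d => hh Hh Hhd.
have := Hd hh Hh Hhd; by rewrite Rplus_0_l Rplus_0_r.
Qed.

Lemma mvt_step (h h' : R -> R) b :
  (forall s, derivable_pt_lim h s (h' s)) ->
  exists c, Rabs c <= Rabs b /\ h b - h 0 = h' c * b.
Proof.
move=> Hd.
case: (Rtotal_order b 0) => [Hb|[Hb|Hb]].
- have [c [Hcb Hc]] := MVT_cor2 h h' b 0 Hb (fun c _ => Hd c).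
  exists c; split; last by rewrite (_ : h b - h 0 = - (h 0 - h b)); [rewrite Hcb; ring| ring].
  rewrite !Rabs_left; lra.
- subst b; exists 0; split; first lra. ring.
- have [c [Hcb Hc]] := MVT_cor2 h h' 0 b Hb (fun c _ => Hd c).
  exists c; split; last by rewrite Hcb; ring.
  rewrite !Rabs_right; lra.
Qed.

Definition zt {n} (y w : vec n) (t : R) (m : nat) : vec n :=
  fun j => y j + (if (j < m)%nat then t * w j else 0).

Lemma zt0 {n} (y w : vec n) t : zt y w t 0 = y.
Proof. apply: functional_extensionality => j; rewrite /zt ltn0; ring. Qed.

Lemma ztn {n} (y w : vec n) t : zt y w t n = fun j => y j + t * w j.
Proof. apply: functional_extensionality => j; by rewrite /zt ltn_ord. Qed.

Lemma zt_step {n} (y w : vec n) t m (Hm : (m < n)%nat) :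
  zt y w t m.+1 = shift (zt y w t m) (Ordinal Hm) (t * w (Ordinal Hm)).
Proof.
apply: functional_extensionality => j; rewrite /shift /zt.
case: (eqVneq j (Ordinal Hm)) => [->|Hji] /=; first by rewrite ltnSn ltnn; ring.
have Hjm : (nat_of_ord j != m).
  apply/negP => /eqP E; apply/negP: Hji; rewrite negbK; apply/eqP; exact: val_inj.
by rewrite ltnS leq_eqVlt (negbTE Hjm).
Qed.

Lemma sum_lt_step {n} m (Hm : (m < n)%nat) (H : 'I_n -> R) :
  \big[Rplus/0]_(j < n | (j < m.+1)%nat) H j =
  \big[Rplus/0]_(j < n | (j < m)%nat) H j + H (Ordinal Hm).
Proof.
rewrite (bigD1 (Ordinal Hm)) /= ?ltnSn // Rplus_comm; congr (_ + _).
apply: eq_bigl => j; case: (eqVneq j (Ordinal Hm)) => [->|Hji] /=.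
  by rewrite ltnn ltnSn.
have Hjm : (nat_of_ord j != m).
  apply/negP => /eqP E; apply/negP: Hji; rewrite negbK; apply/eqP; exact: val_inj.
by rewrite andbT ltnS leq_eqVlt (negbTE Hjm).
Qed.

Lemma sum_lt0 {n} (H : 'I_n -> R) : \big[Rplus/0]_(j < n | (j < 0)%nat) H j = 0.
Proof. by rewrite big_pred0 // => j; rewrite ltn0. Qed.

Lemma sum_ltn {n} (H : 'I_n -> R) :
  \big[Rplus/0]_(j < n | (j < n)%nat) H j = \big[Rplus/0]_(j < n) H j.
Proof. by apply: eq_bigl => j; rewrite ltn_ord. Qed.

Lemma sq_le_of_abs (a b : R) : Rabs a <= Rabs b -> a * a <= b * b.
Proof. move=> H; have := Rsqr_le_abs_1 _ _ H; by rewrite /Rsqr. Qed.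

Lemma sum_abs_ge0 {n} (w : vec n) : 0 <= \big[Rplus/0]_(j < n) Rabs (w j).
Proof. apply: sumR_ge0 => j; apply: Rabs_pos. Qed.

Lemma dist_shift_zt {n} (y w : vec n) t m (Hm : (m < n)%nat) c :
  0 <= t -> Rabs c <= Rabs (t * w (Ordinal Hm)) ->
  Defs.dist (shift (zt y w t m) (Ordinal Hm) c) y <= t * vnorm w.
Proof.
move=> Ht Hc.
have Hb : Defs.dist (shift (zt y w t m) (Ordinal Hm) c) y * Defs.dist (shift (zt y w t m) (Ordinal Hm) c) y
     <= (t * vnorm w) * (t * vnorm w).
  have -> : t * vnorm w * (t * vnorm w) = t * t * (vnorm w * vnorm w) by ring.
  rewrite vnorm_sq dist_sq /dot -sumR_scal; apply: sumR_le => j.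
  have -> : t * t * (w j * w j) = (t * w j) * (t * w j) by ring.
  apply: sq_le_of_abs; rewrite /shift /zt.
  case: (eqVneq j (Ordinal Hm)) => [->|Hji] /=.
    rewrite ltnn ?eqxx.
    have -> : y (Ordinal Hm) + 0 + c - y (Ordinal Hm) = c by ring.
    exact: Hc.
  rewrite ?(negbTE Hji); case: (j < m)%nat.
    have -> : y j + t * w j - y j = t * w j by ring. apply: Rle_refl.
  have -> : y j + 0 - y j = 0 by ring. rewrite Rabs_R0; apply: Rabs_pos.
have H1 := dist_ge0 (shift (zt y w t m) (Ordinal Hm) c) y.
have H2 : 0 <= t * vnorm w by apply: Rmult_le_pos => //; apply: vnorm_ge0.
nra.
Qed.

Lemma dir_deriv {n} (F : vec n -> R) (G : 'I_n -> vec n -> R) (y w : vec n) T :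
  (forall i x, partial F i x (G i x)) -> (forall i, continuous_at (G i) y) -> 0 < T ->
  (forall t, 0 < t <= T -> F (fun j => y j + t * w j) <= F y) ->
  \big[Rplus/0]_(i < n) (G i y * w i) <= 0.
Proof.
move=> HF HG HT Hdec.
apply: Rnot_lt_le => HS.
set S := \big[Rplus/0]_(i < n) (G i y * w i) in HS.
set W := \big[Rplus/0]_(j < n) Rabs (w j).
have HW : 0 <= W by apply: sum_abs_ge0.
set eps := S / (2 * (W + 1)).
have Heps : 0 < eps by rewrite /eps; apply: Rdiv_lt_0_compat; lra.
have [d [Hd Hdel]] := fin_delta (fun i d => forall x, Defs.dist x y < d -> Rabs (G i x - G i y) < eps)
  (fun i d d' Hd' P x Hx => P x ltac:(lra))
  (fun i => HG i eps Heps).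
have Hnw := vnorm_ge0 w.
set t := Rmin T (d / (2 * (vnorm w + 1))).
have Ht : 0 < t by apply: Rmin_pos => //; apply: Rdiv_lt_0_compat; lra.
have HtT : t <= T by apply: Rmin_l.
have Htd : t * vnorm w < d.
  have h := Rmin_r T (d / (2 * (vnorm w + 1))); rewrite -/t in h.
  have : t * vnorm w <= d / (2 * (vnorm w + 1)) * vnorm w by apply: Rmult_le_compat_r.
  have -> : d / (2 * (vnorm w + 1)) * vnorm w = d * (vnorm w / (2 * (vnorm w + 1))) by field; lra.
  have : vnorm w / (2 * (vnorm w + 1)) < 1.
    apply: (Rmult_lt_reg_r (2 * (vnorm w + 1))); first lra.
    rewrite /Rdiv Rmult_assoc Rinv_l; lra.
  move=> h1 h2; nra.
have Claim : forall m, (m <= n)%nat ->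
   F (zt y w t m) - F y >= t * \big[Rplus/0]_(j < n | (j < m)%nat) (G j y * w j)
                           - t * eps * \big[Rplus/0]_(j < n | (j < m)%nat) Rabs (w j).
  elim=> [|m IH] Hmn.
    rewrite zt0 !sum_lt0; lra.
  have Hm : (m < n)%nat by [].
  have IH' := IH (ltnW Hm).
  rewrite (zt_step _ _ _ _ Hm) !(sum_lt_step _ Hm).
  set i := Ordinal Hm.
  have Hd1 : forall s, derivable_pt_lim (fun s => F (shift (zt y w t m) i s)) s
                (G i (shift (zt y w t m) i s)).
    move=> s; apply: dpl_shift.
    have := HF i (shift (zt y w t m) i s); rewrite /partial.
    have -> : (fun u => F (shift (shift (zt y w t m) i s) i u)) =
              (fun u => F (shift (zt y w t m) i (s + u))).
      by apply: functional_extensionality => u; rewrite shift_shift.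
    done.
  have [c [Hc Heq]] := mvt_step _ _ (t * w i) Hd1.
  rewrite shift0 in Heq.
  have Hdist : Defs.dist (shift (zt y w t m) i c) y < d.
    apply: Rle_lt_trans Htd; apply: dist_shift_zt; [lra| exact: Hc].
  have Hg := Hdel i _ Hdist.
  have Hab : Rabs ((G i (shift (zt y w t m) i c) - G i y) * (t * w i)) <= eps * (t * Rabs (w i)).
    rewrite Rabs_mult Rabs_mult (Rabs_pos_eq t); last lra.
    apply: Rmult_le_compat; try lra; try apply: Rabs_pos.
    apply: Rmult_le_pos; [lra| apply: Rabs_pos].
  move/Rabs_le_inv: Hab => [Hab1 Hab2].
  have E : F (shift (zt y w t m) i (t * w i)) - F y =
     (F (zt y w t m) - F y) + G i (shift (zt y w t m) i c) * (t * w i) by lra.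
  rewrite E; nra.
have := Claim n (leqnn n).
rewrite ztn !sum_ltn -/S -/W.
have := Hdec t (conj Ht HtT).
have : eps * W <= S / 2.
  rewrite /eps.
  have -> : S / (2 * (W + 1)) * W = (S / 2) * (W / (W + 1)) by field; lra.
  have : W / (W + 1) <= 1.
    apply: (Rmult_le_reg_r (W + 1)); first lra.
    rewrite /Rdiv Rmult_assoc Rinv_l; lra.
  move=> h; have : 0 < S / 2 by lra. nra.
move=> h1 h2 h3; nra.
Qed.

Lemma dist_scal {n} (c : R) (a b : vec n) : 0 <= c ->
  Defs.dist (fun j => c * a j) (fun j => c * b j) = c * Defs.dist a b.
Proof.
move=> Hc.
have H1 := dist_ge0 (fun j => c * a j) (fun j => c * b j).
have H2 := dist_ge0 a b.
have E : Defs.dist (fun j => c * a j) (fun j => c * b j) * Defs.dist (fun j => c * a j) (fun j => c * b j)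
   = (c * Defs.dist a b) * (c * Defs.dist a b).
  rewrite !dist_sq.
  have -> : c * Defs.dist a b * (c * Defs.dist a b) = (c * c) * (Defs.dist a b * Defs.dist a b) by ring.
  rewrite dist_sq -sumR_scal; apply: sumR_ext => j; ring.
have H3 : 0 <= c * Defs.dist a b by apply: Rmult_le_pos.
nra.
Qed.

Lemma vnorm_pos {n} {v : vec n} : v <> (fun _ => 0) -> 0 < vnorm v.
Proof.
move=> Hv; rewrite /vnorm; apply: sqrt_lt_R0.
case: (dot_ge0 v) => // /esym H; case: Hv.
apply: functional_extensionality => i.
have := sumR_eq0 (fun j => v j * v j) (fun j => sqr_ge0 _) H i => /= /Rmult_integral; lra.
Qed.

Lemma segment_in {n} {O : vec n -> Prop} {y z : vec n} {r t} :
  Rn_convex O -> Rn_closure O y -> 0 < r -> (forall x, Defs.dist x z < r -> O x) ->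
  0 < t <= 1 -> O (fun j => y j + t * (z j - y j)).
Proof.
move=> Hconv Hcl Hr Hball Ht.
case: (Req_dec t 1) => [->|Ht1].
  have -> : (fun j => y j + 1 * (z j - y j)) = z.
    by apply: functional_extensionality => j; ring.
  by apply: Hball; rewrite vdist_refl.
have Ht' : t < 1 by lra.
have [y' [Oy' Hy']] := Hcl (t * r / (1 - t)) ltac:(apply: Rdiv_lt_0_compat; nra).
set c := (1 - t) / t.
have Hc : 0 <= c by rewrite /c; apply: Rle_mult_inv_pos; lra.
set z'' := fun j => z j + c * (y j - y' j).
have Oz : O z''.
  apply: Hball.
  have -> : Defs.dist z'' z = Defs.dist (fun j => c * y j) (fun j => c * y' j).
    rewrite /Defs.dist /vnorm /dot /vsub /z''; f_equal; apply: sumR_ext => j; ring.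
  rewrite dist_scal // vdist_sym.
  have -> : r = c * (t * r / (1 - t)) by rewrite /c; field; lra.
  apply: Rmult_lt_compat_l => //; rewrite /c; apply: Rdiv_lt_0_compat; lra.
have := Hconv z'' y' t Oz Oy' ltac:(lra).
have -> : vadd (vscale t z'') (vscale (1 - t) y') = (fun j => y j + t * (z j - y j)).
  apply: functional_extensionality => j; rewrite /vadd /vscale /z'' /c; field; lra.
done.
Qed.

Lemma normal_pos {n} (O : vec n -> Prop) rho Drho (y p : vec n) r :
  Rn_convex O -> defining_function O rho Drho -> Rn_closure O y -> ~ O y -> 0 < r ->
  (forall z, Defs.dist z p < r -> O z) ->
  0 < \big[Rplus/0]_(i < n) ((y i - p i) * Drho y i).
Proof.
move=> Hconv [Hs [HD [HO Hnz]]] Hcl Hny Hr Hball.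
have [Hcont [D [HDp HDc]]] := Hs 2%nat.
have HDcont : forall i x, continuous_at (D i) x by move=> i x; exact: (proj1 (HDc i) x).
have HDe : forall x i, Drho x i = D i x by move=> x i; exact: (uniqueness_limite _ _ _ _ (HD x i) (HDp i x)).
have Hry : rho y = 0.
  have h1 : 0 <= rho y by apply: Rnot_lt_le => h; apply: Hny; apply/HO.
  case: h1 => // h1.
  have [d [Hd Hcd]] := Hcont y (rho y) h1.
  have [z [Oz Hz]] := Hcl d Hd.
  have := Hcd z Hz; move/HO: Oz => Oz; move/Rabs_def2 => [_ h2]; lra.
have HN := vnorm_pos (Hnz y Hry).
set N := vnorm (Drho y) in HN.
set s := r / 2.
set z := fun j => p j + (s / N) * Drho y j.
have Hzp : Defs.dist z p = s.
  have -> : Defs.dist z p = Defs.dist (fun j => (s / N) * Drho y j) (fun j => (s / N) * 0).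
    rewrite /Defs.dist /vnorm /dot /vsub /z; f_equal; apply: sumR_ext => j; ring.
  rewrite dist_scal; last by apply: Rle_mult_inv_pos; rewrite /s; lra.
  have -> : Defs.dist (Drho y) (fun _ => 0) = N.
    rewrite /N /Defs.dist /vnorm /dot /vsub; f_equal; apply: sumR_ext => j; ring.
  field; lra.
have Hball' : forall x, Defs.dist x z < s -> O x.
  move=> x Hx; apply: Hball.
  have := dist_tri2 x z p; rewrite Hzp => h.
  have h0 := dist_ge0 x z; have h1 := dist_ge0 x p.
  rewrite /s in Hx h; nra.
have Hs0 : 0 < s by rewrite /s; lra.
have Hdir := dir_deriv (fun x => rho x) D y (fun j => z j - y j) 1 HDp (fun i => HDcont i y) Rlt_0_1
  (fun t Ht => ltac:(
     have Hin := segment_in Hconv Hcl Hs0 Hball' Ht;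
     move/HO: Hin; rewrite Hry => h; lra)).
have E : \big[Rplus/0]_(i < n) (D i y * (z i - y i)) =
  - (\big[Rplus/0]_(i < n) ((y i - p i) * Drho y i)) + (s / N) * (N * N).
  have HNN : N * N = dot (Drho y) (Drho y) by apply: vnorm_sq.
  rewrite HNN /dot.
  have -> : - (\big[Rplus/0]_(i < n) ((y i - p i) * Drho y i)) =
     \big[Rplus/0]_(i < n) ((-1) * ((y i - p i) * Drho y i)) by rewrite sumR_scal; ring.
  rewrite -sumR_scal -sumR_plus; apply: sumR_ext => j; rewrite /z HDe; ring.
have : (s / N) * (N * N) = s * N by field; lra.
have : 0 < s * N by apply: Rmult_lt_0_compat.
lra.
Qed.

Lemma coord_le_vnorm {n} (x : vec n) i : Rabs (x i) <= vnorm x.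
Proof.
have -> : vnorm x = Defs.dist x (fun _ => 0).
  rewrite /Defs.dist /vnorm /dot /vsub; f_equal; apply: sumR_ext => j; ring.
have := coord_le_dist x (fun _ => 0) i; by rewrite Rminus_0_r.
Qed.

Lemma sq_dist {n} (p x : vec n) : sq p x = Defs.dist x p * Defs.dist x p.
Proof. by rewrite dist_sq. Qed.

Lemma Ex_pos {n} k (p x : vec n) : 0 < Ex k p x.
Proof. exact: exp_pos. Qed.

Lemma Ex_le1 {n} k (p x : vec n) : 0 <= k -> Ex k p x <= 1.
Proof.
move=> Hk; rewrite /Ex -exp_0.
have : 0 <= sq p x by rewrite sq_dist; apply: sqr_ge0.
move=> h; have h' : - k * sq p x <= 0 by nra.
case: (Rle_lt_or_eq_dec _ _ h') => [h2|->]; last by right.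
by left; apply: exp_increasing.
Qed.

Lemma Eop_neg {n} Lam ux0 s (xi : vec n) (X : 'I_n -> 'I_n -> R) :
  0 <= ux0 -> 0 < quad X xi -> Eop Lam ux0 s xi X < 0.
Proof.
move=> Hu Hq; rewrite /Eop.
case: (Rlt_dec 0 ux0) => h1 /=.
  rewrite /Fop; have := Rmin_r (vnorm xi - Lam * Rabs s) (- quad X xi); lra.
case: (Rlt_dec ux0 0) => h2 /=; first lra.
rewrite /Hop; lra.
Qed.

Lemma Eop_pos {n} Lam ux0 s (xi : vec n) (X : 'I_n -> 'I_n -> R) :
  ux0 <= 0 -> quad X xi < 0 -> Eop Lam ux0 s xi X > 0.
Proof.
move=> Hu Hq; rewrite /Eop.
case: (Rlt_dec 0 ux0) => h1 /=; first lra.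
case: (Rlt_dec ux0 0) => h2 /=.
  rewrite /Gop; have := Rmax_r (Lam * Rabs s - vnorm xi) (- quad X xi); lra.
rewrite /Hop; lra.
Qed.

Lemma closure_sub {n} {O : vec n -> Prop} {x} : O x -> Rn_closure O x.
Proof. by move=> Ox e He; exists x; split => //; rewrite vdist_refl. Qed.

Lemma closure_closed {n} {O : vec n -> Prop} {x} :
  (forall e, 0 < e -> exists y, Rn_closure O y /\ Defs.dist y x < e) -> Rn_closure O x.
Proof.
move=> H e He.
have [y [Cy Hy]] := H (e / 2) ltac:(lra).
have [z [Oz Hz]] := Cy (e / 2) ltac:(lra).
exists z; split => //.
have := dist_tri2 z y x.
have := dist_ge0 z y; have := dist_ge0 y x; have := dist_ge0 z x.
move=> h1 h2 h3 h4; nra.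
Qed.

Lemma closure_bound {n} {O : vec n -> Prop} :
  Rn_bounded O -> exists M, forall x, Rn_closure O x -> forall i, Rabs (x i) <= M.
Proof.
move=> [M HM]; exists (M + 1) => x Cx i.
have [y [Oy Hy]] := Cx 1 Rlt_0_1.
have h1 := coord_le_vnorm y i; have h2 := HM y Oy.
have h3 := coord_le_dist y x i.
have := Rabs_triang (y i) (x i - y i); have -> : y i + (x i - y i) = x i by ring.
rewrite Rabs_minus_sym in h3; lra.
Qed.

Lemma strict_touch {n} {y x : vec n} : x <> y -> 0 < sq y x * sq y x.
Proof.
move=> Hxy; rewrite sq_dist.
have h := dist_ge0 x y.
have h2 : Defs.dist x y <> 0 by move=> /dist_eq0.
have : 0 < Defs.dist x y by lra.
move=> h3; have h4 : 0 < Defs.dist x y * Defs.dist x y by nra.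
nra.
Qed.

Lemma open_True {n} : Rn_open (fun _ : vec n => True).
Proof. by move=> x _; exists 1; split => //; lra. Qed.

Lemma f_cont {n} {C : vec n -> Prop} {u : vec n -> R} {h : vec n -> R} :
  continuous_on C u -> (forall x, continuous_at h x) ->
  forall x, C x -> forall e, 0 < e -> exists d, 0 < d /\
    forall z, C z -> Defs.dist z x < d -> Rabs ((u z - h z) - (u x - h x)) < e.
Proof.
move=> Hu Hh x Cx e He.
have [d1 [Hd1 H1]] := Hu x Cx (e / 2) ltac:(lra).
have [d2 [Hd2 H2]] := Hh x (e / 2) ltac:(lra).
exists (Rmin d1 d2); split; first by apply: Rmin_pos.
move=> z Cz Hz.
have A := H1 z Cz (Rlt_le_trans _ _ _ Hz (Rmin_l _ _)).
have B := H2 z (Rlt_le_trans _ _ _ Hz (Rmin_r _ _)).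
have -> : u z - h z - (u x - h x) = (u z - u x) + - (h z - h x) by ring.
apply: Rle_lt_trans (Rabs_triang _ _) _; rewrite Rabs_Ropp; lra.
Qed.

Lemma dot_g_nu {n} k al be (p y : vec n) (D : vec n) :
  dot (Tg k al be p y y) (vscale (/ vnorm D) D) =
  (al * Ex k p y * (-2 * k) * / vnorm D) * \big[Rplus/0]_(i < n) ((y i - p i) * D i).
Proof.
rewrite /dot -sumR_scal; apply: sumR_ext => i; rewrite /Tg /vscale sq_self; ring.
Qed.

Lemma core_min {n} (O : vec n -> Prop) Lam u (p q : vec n) :
  Rn_open O -> Rn_bounded O -> Rn_convex O -> smooth_boundary O ->
  continuous_on (Rn_closure O) u -> visc_super O Lam u ->
  (forall x, O x -> 0 <= u x) -> O p -> O q -> u q < u p -> False.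
Proof.
move=> Hop Hbd Hconv [rho [Drho Hdf]] Hcu [_ [Hint Hbdry]] Hnn Op Oq Hpq.
have Hnn' : forall x, Rn_closure O x -> 0 <= u x.
  move=> x Cx; apply: Rnot_lt_le => hx.
  have [d [Hd Hcd]] := Hcu x Cx (- u x) ltac:(lra).
  have [z [Oz Hz]] := Cx d Hd.
  have := Hcd z (closure_sub Oz) Hz; have := Hnn z Oz.
  move=> h /Rabs_def2 [h1 h2]; lra.
set d0 := (u p - u q) / 3.
have Hd0 : 0 < d0 by rewrite /d0; lra.
have [r1 [Hr1 Hball]] := Hop p Op.
have [d1 [Hd1 Hcp]] := Hcu p (closure_sub Op) d0 Hd0.
set r := Rmin r1 d1.
have Hr : 0 < r by apply: Rmin_pos.
set k := / (r * r).
have Hk : 0 < k by apply: Rinv_0_lt_compat; nra.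
set f := fun x => u x - d0 * Ex k p x.
have [M HM] := closure_bound Hbd.
have Hfc := f_cont Hcu (fun x => cont_mult _ _ _ (cont_const d0 x) (cont_Ex k p x)).
have [y [Cy Hmin]] := min_exists (Rn_closure O) f M HM (@closure_closed _ O) (ex_intro _ q (closure_sub Oq)) Hfc.
have Hfar : r <= Defs.dist y p.
  apply: Rnot_lt_le => h.
  have h1 : Defs.dist y p < d1 by apply: (Rlt_le_trans _ _ _ h); apply: Rmin_r.
  have := Hcp y Cy h1; move/Rabs_def2 => [h2 h3].
  have := Hmin q (closure_sub Oq); rewrite /f.
  have := Ex_le1 k p y (Rlt_le _ _ Hk); have := Ex_pos k p q.
  move=> h4 h5 h6.
  have : d0 * Ex k p y <= d0 by nra.
  have : 0 < d0 * Ex k p q by nra.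
  move=> ? ?; have Hd0e : 3 * d0 = u p - u q by rewrite /d0; field.
  lra.
set phi := Tf k d0 (-1) (f y) p y.
set g := Tg k d0 (-1) p y.
set H := TH k d0 (-1) p y.
have Hphiy : phi y = u y by rewrite /phi /Tf sq_self /f; ring.
have Htouch : forall x, Rn_closure O x -> x <> y -> u x > phi x.
  move=> x Cx Hxy; have := Hmin x Cx; have := strict_touch Hxy.
  rewrite /phi /Tf /f; lra.
have Hquad : 0 < quad (H y) (g y).
  rewrite /H /g quad_T.
  have HE := Ex_pos k p y.
  have Hs : r * r <= sq p y.
    rewrite sq_dist; apply: Rmult_le_compat; lra.
  have Hks : 1 <= k * sq p y.
    have E1 : k * (r * r) = 1 by rewrite /k; apply: Rinv_l; nra.
    rewrite -E1; apply: Rmult_le_compat_l; lra.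
  have h1 : 0 < k * k * k by repeat apply: Rmult_lt_0_compat.
  have h2 : 0 < d0 * d0 * d0 by apply: Rmult_lt_0_compat; [apply: Rmult_lt_0_compat|]; exact: Hd0.
  have h3 : 0 < Ex k p y * Ex k p y * Ex k p y by repeat apply: Rmult_lt_0_compat.
  have h4 : 0 < sq p y by nra.
  have h5 : 0 < 2 * k * sq p y - 1 by lra.
  have h8 : 0 < 8 by lra.
  exact: (Rmult_lt_0_compat _ _ (Rmult_lt_0_compat _ _ (Rmult_lt_0_compat _ _
     (Rmult_lt_0_compat _ _ (Rmult_lt_0_compat _ _ h8 h1) h2) h3) h4) h5).
case: (classic (O y)) => [Oy|Ony].
  have := Hint y phi g H Oy (Tf_C2 _ _ _ _ _ _ _) Hphiy
     (fun x Ox Hne => Htouch x (closure_sub Ox) Hne).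
  have := Eop_neg Lam (u y) (phi y) (g y) (H y) (Hnn' y Cy) Hquad.
  lra.
set nu := vscale (/ vnorm (Drho y)) (Drho y).
have Hout : outer_normal O y nu.
  by split; [split| exists rho, Drho].
have := Hbdry y nu phi g H (fun _ => True) Hout open_True (fun _ _ => I)
   (Tf_C2 _ _ _ _ _ _ _) Hphiy Htouch.
have HE := Eop_neg Lam (u y) (phi y) (g y) (H y) (Hnn' y Cy) Hquad.
have Hball' : forall z, Defs.dist z p < r -> O z.
  move=> z hz; apply: Hball; apply: (Rlt_le_trans _ _ _ hz); apply: Rmin_l.
have Hnp := normal_pos O rho Drho y p r Hconv Hdf Cy Ony Hr Hball'.
have HDn : Drho y <> (fun _ => 0).
  move=> E; rewrite E in Hnp.
  rewrite big1 in Hnp; [lra| move=> i _; ring].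
have HN := vnorm_pos HDn.
have Hdot : dot (g y) nu < 0.
  rewrite /g /nu dot_g_nu.
  have HEx := Ex_pos k p y.
  have : 0 < d0 * Ex k p y * (2 * k) * / vnorm (Drho y).
    have hk2 : 0 < 2 * k by lra.
    exact: (Rmult_lt_0_compat _ _ (Rmult_lt_0_compat _ _ (Rmult_lt_0_compat _ _ Hd0 HEx) hk2)
       (Rinv_0_lt_compat _ HN)).
  move=> h; nra.
have := Rmax_lub_lt _ _ 0 HE Hdot.
lra.
Qed.

Lemma core_max {n} (O : vec n -> Prop) Lam u (p q : vec n) :
  Rn_open O -> Rn_bounded O -> Rn_convex O -> smooth_boundary O ->
  continuous_on (Rn_closure O) u -> visc_sub O Lam u ->
  (forall x, O x -> u x <= 0) -> O p -> O q -> u p < u q -> False.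
Proof.
move=> Hop Hbd Hconv [rho [Drho Hdf]] Hcu [_ [Hint Hbdry]] Hnn Op Oq Hpq.
have Hnn' : forall x, Rn_closure O x -> u x <= 0.
  move=> x Cx; apply: Rnot_lt_le => hx.
  have [d [Hd Hcd]] := Hcu x Cx (u x) ltac:(lra).
  have [z [Oz Hz]] := Cx d Hd.
  have := Hcd z (closure_sub Oz) Hz; have := Hnn z Oz.
  move=> h /Rabs_def2 [h1 h2]; lra.
set d0 := (u q - u p) / 3.
have Hd0 : 0 < d0 by rewrite /d0; lra.
have [r1 [Hr1 Hball]] := Hop p Op.
have [d1 [Hd1 Hcp]] := Hcu p (closure_sub Op) d0 Hd0.
set r := Rmin r1 d1.
have Hr : 0 < r by apply: Rmin_pos.
set k := / (r * r).
have Hk : 0 < k by apply: Rinv_0_lt_compat; nra.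
set f := fun x => - u x - d0 * Ex k p x.
have [M HM] := closure_bound Hbd.
have Hcu' : continuous_on (Rn_closure O) (fun x => - u x).
  move=> x Cx e He; have [d [Hd Hcd]] := Hcu x Cx e He; exists d; split => // z Cz Hz.
  have -> : - u z - - u x = - (u z - u x) by ring.
  by rewrite Rabs_Ropp; apply: Hcd.
have Hfc := f_cont Hcu' (fun x => cont_mult _ _ _ (cont_const d0 x) (cont_Ex k p x)).
have [y [Cy Hmin]] := min_exists (Rn_closure O) f M HM (@closure_closed _ O) (ex_intro _ q (closure_sub Oq)) Hfc.
have Hfar : r <= Defs.dist y p.
  apply: Rnot_lt_le => h.
  have h1 : Defs.dist y p < d1 by apply: (Rlt_le_trans _ _ _ h); apply: Rmin_r.
  have := Hcp y Cy h1; move/Rabs_def2 => [h2 h3].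
  have := Hmin q (closure_sub Oq); rewrite /f.
  have := Ex_le1 k p y (Rlt_le _ _ Hk); have := Ex_pos k p q.
  move=> h4 h5 h6.
  have : d0 * Ex k p y <= d0 by nra.
  have : 0 < d0 * Ex k p q by nra.
  move=> ? ?; have Hd0e : 3 * d0 = u q - u p by rewrite /d0; field.
  lra.
set phi := Tf k (- d0) 1 (- f y) p y.
set g := Tg k (- d0) 1 p y.
set H := TH k (- d0) 1 p y.
have Hphiy : phi y = u y by rewrite /phi /Tf sq_self /f; ring.
have Htouch : forall x, Rn_closure O x -> x <> y -> u x < phi x.
  move=> x Cx Hxy; have := Hmin x Cx; have := strict_touch Hxy.
  rewrite /phi /Tf /f; lra.
have Hquad : quad (H y) (g y) < 0.
  rewrite /H /g quad_T.
  have HE := Ex_pos k p y.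
  have Hs : r * r <= sq p y.
    rewrite sq_dist; apply: Rmult_le_compat; lra.
  have Hks : 1 <= k * sq p y.
    have E1 : k * (r * r) = 1 by rewrite /k; apply: Rinv_l; nra.
    rewrite -E1; apply: Rmult_le_compat_l; lra.
  have h1 : 0 < k * k * k by repeat apply: Rmult_lt_0_compat.
  have h2 : 0 < d0 * d0 * d0 by apply: Rmult_lt_0_compat; [apply: Rmult_lt_0_compat|]; exact: Hd0.
  have -> : - d0 * - d0 * - d0 = - (d0 * d0 * d0) by ring.
  have h3 : 0 < Ex k p y * Ex k p y * Ex k p y by repeat apply: Rmult_lt_0_compat.
  have h4 : 0 < sq p y by nra.
  have h5 : 0 < 2 * k * sq p y - 1 by lra.
  have h8 : 0 < 8 by lra.
  have := (Rmult_lt_0_compat _ _ (Rmult_lt_0_compat _ _ (Rmult_lt_0_compat _ _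
     (Rmult_lt_0_compat _ _ (Rmult_lt_0_compat _ _ h8 h1) h2) h3) h4) h5).
  move=> hh.
  have -> : 8 * (k * k * k) * - (d0 * d0 * d0) * (Ex k p y * Ex k p y * Ex k p y) * sq p y * (2 * k * sq p y - 1)
    = - (8 * (k * k * k) * (d0 * d0 * d0) * (Ex k p y * Ex k p y * Ex k p y) * sq p y * (2 * k * sq p y - 1)) by ring.
  lra.
case: (classic (O y)) => [Oy|Ony].
  have := Hint y phi g H Oy (Tf_C2 _ _ _ _ _ _ _) Hphiy
     (fun x Ox Hne => Htouch x (closure_sub Ox) Hne).
  have := Eop_pos Lam (u y) (phi y) (g y) (H y) (Hnn' y Cy) Hquad.
  lra.
set nu := vscale (/ vnorm (Drho y)) (Drho y).
have Hout : outer_normal O y nu.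
  by split; [split| exists rho, Drho].
have := Hbdry y nu phi g H (fun _ => True) Hout open_True (fun _ _ => I)
   (Tf_C2 _ _ _ _ _ _ _) Hphiy Htouch.
have HE := Eop_pos Lam (u y) (phi y) (g y) (H y) (Hnn' y Cy) Hquad.
have Hball' : forall z, Defs.dist z p < r -> O z.
  move=> z hz; apply: Hball; apply: (Rlt_le_trans _ _ _ hz); apply: Rmin_l.
have Hnp := normal_pos O rho Drho y p r Hconv Hdf Cy Ony Hr Hball'.
have HDn : Drho y <> (fun _ => 0).
  move=> E; rewrite E in Hnp.
  rewrite big1 in Hnp; [lra| move=> i _; ring].
have HN := vnorm_pos HDn.
have Hdot : dot (g y) nu > 0.
  rewrite /g /nu dot_g_nu.
  have HEx := Ex_pos k p y.
  have : 0 < d0 * Ex k p y * (2 * k) * / vnorm (Drho y).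
    have hk2 : 0 < 2 * k by lra.
    exact: (Rmult_lt_0_compat _ _ (Rmult_lt_0_compat _ _ (Rmult_lt_0_compat _ _ Hd0 HEx) hk2)
       (Rinv_0_lt_compat _ HN)).
  move=> h.
  have -> : - d0 * Ex k p y * (-2 * k) * / vnorm (Drho y) = d0 * Ex k p y * (2 * k) * / vnorm (Drho y) by ring.
  nra.
have := Rmin_glb_lt _ _ 0 HE Hdot.
lra.
Qed.

Theorem lemma4 (n : nat) (Omega : vec n -> Prop) (Lam : R) (u : vec n -> R) :
  Rn_open Omega -> Rn_bounded Omega -> Rn_convex Omega -> smooth_boundary Omega ->
  0 < Lam ->
  visc_solution Omega Lam u ->
  (exists x y, Omega x /\ Omega y /\ u x <> u y) ->
  (exists x, Omega x /\ u x > 0) /\ (exists x, Omega x /\ u x < 0).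
Proof.
move=> Hop Hbd Hconv Hsm HLam [Hcu [Hsub Hsup]] [x1 [x2 [O1 [O2 Hne]]]].
split.
- apply: NNPP => Hno.
  have Hle : forall x, Omega x -> u x <= 0.
    move=> x Ox; apply: Rnot_lt_le => h; apply: Hno; exists x; split => //.
  case: (Rlt_or_le (u x1) (u x2)) => h.
    exact: (core_max Omega Lam u _ _ Hop Hbd Hconv Hsm Hcu Hsub Hle O1 O2 h).
  have h' : u x2 < u x1 by lra.
  exact: (core_max Omega Lam u _ _ Hop Hbd Hconv Hsm Hcu Hsub Hle O2 O1 h').
- apply: NNPP => Hno.
  have Hle : forall x, Omega x -> 0 <= u x.
    move=> x Ox; apply: Rnot_lt_le => h; apply: Hno; exists x; split => //.
  case: (Rlt_or_le (u x1) (u x2)) => h.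
    exact: (core_min Omega Lam u _ _ Hop Hbd Hconv Hsm Hcu Hsup Hle O2 O1 h).
  have h' : u x2 < u x1 by lra.
  exact: (core_min Omega Lam u _ _ Hop Hbd Hconv Hsm Hcu Hsup Hle O1 O2 h').
Qed.
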